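(* Let $V$ be a real vector space and $\mathcal R:V\to\mathbb R$ an $\eta$-proper regularizer for some $\eta\ge1$. Let $f_\star,h\in V$ with $\mathcal R(h-f_\star)=\rho$, where $\rho\ge5\eta\,\mathcal R(f_\star)$, let $\beta\ge1$ and $\hat f:=f_\star+\beta(h-f_\star)$. Then $$\mathcal R(\hat f)-\mathcal R(f_\star)\ge\frac{\beta}{2\eta^2}\big(\mathcal R(h)-\mathcal R(f_\star)\big).$$
   Context: A function $\mathcal R:V\to\mathbb R$ is an $\eta$-proper regularizer ($\eta\ge1$) if: (a) it is non-negative, even, convex, and $\mathcal R(0)=0$; (b) $\mathcal R(f+g)\le\eta(\mathcal R(f)+\mathcal R(g))$ for all $f,g\in V$; (c) $\mathcal R(af)\le a\,\mathcal R(f)$ for all $0\le a\le1$, and if $\eta=2$ moreover $\mathcal R(af)\le a^2\mathcal R(f)$. (For example $\mathcal R(f)=\|\mathcal Df\|^2$ for a linear operator $\mathcal D$ is $2$-proper.) *)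

(* Defs.v *)
From HB Require Import structures.
From mathcomp Require Import all_boot all_order all_algebra.
From mathcomp Require Import reals.
Set Implicit Arguments. Unset Strict Implicit. Unset Printing Implicit Defensive.
Import Order.TTheory GRing.Theory Num.Theory.
Local Open Scope ring_scope.

Definition proper_regularizer (R : realType) (V : lmodType R)
    (eta : R) (Reg : V -> R) : Prop :=
      (forall f, 0 <= Reg f) /\
      (forall f, Reg (- f) = Reg f) /\
      (forall (t : R) f g, 0 <= t -> t <= 1 ->
          Reg (t *: f + (1 - t) *: g) <= t * Reg f + (1 - t) * Reg g) /\
      Reg 0 = 0 /\
      (forall f g, Reg (f + g) <= eta * (Reg f + Reg g)) /\
      (forall (a : R) f, 0 <= a -> a <= 1 ->
          Reg (a *: f) <= a * Reg f /\ (eta = 2 -> Reg (a *: f) <= a ^+ 2 * Reg f)).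

(* Main.v *)
Require Import Defs.
From HB Require Import structures.
From mathcomp Require Import all_boot all_order all_algebra.
From mathcomp Require Import reals.
From mathcomp Require Import ring lra.
Import Order.TTheory GRing.Theory Num.Theory.
Local Open Scope ring_scope.

Theorem mainTheorem10 (R : realType) (V : lmodType R) (eta : R) (Reg : V -> R)
    (fstar h : V) (rho beta : R) :
  1 <= eta ->
  proper_regularizer eta Reg ->
  Reg (h - fstar) = rho ->
  5 * eta * Reg fstar <= rho ->
  1 <= beta ->
  Reg (fstar + beta *: (h - fstar)) - Reg fstar
    >= beta / (2 * eta ^+ 2) * (Reg h - Reg fstar).
Proof.
move=> He [P0 [Pev [_ [_ [Ptri Phom]]]]] Hrho Hr Hb.
set g := h - fstar.
set F := Reg (fstar + beta *: g).
set X := Reg (beta *: g).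
set r := Reg fstar.
have r0 : 0 <= r by apply: P0.
have H1 : X <= eta * (F + r).
  have := Ptri (fstar + beta *: g) (- fstar).
  by rewrite Pev addrC addKr.
have b0 : 0 < beta by lra.
have H2 : beta * rho <= X.
  have [h1 _] := Phom (beta^-1) (beta *: g) ltac:(by rewrite invr_ge0 ltW)
     ltac:(by rewrite invf_le1 //).
  rewrite scalerA mulVf ?scale1r in h1; last by lra.
  rewrite -Hrho.
  have := ler_wpM2l (ltW b0) h1.
  by rewrite mulrA mulfV ?mul1r //; lra.
have H3 : Reg h <= eta * (r + rho).
  have -> : h = fstar + g by rewrite /g addrC subrK.
  by rewrite /r -Hrho; apply: Ptri.
set H := Reg h in H3 *.
have e0 : 0 < 2 * eta ^+ 2 by rewrite expr2; nra.
rewrite mulrAC ler_pdivrMr //.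
have eb : 0 <= eta * beta by nra.
have k1 := ler_wpM2l eb Hr.
have k2 : eta * F >= beta * rho - eta * r by nra.
have k3 : beta * H <= beta * eta * (r + rho) by nra.
rewrite expr2.
have k4 : 0 <= (eta - 1) * beta * r by apply: mulr_ge0; [apply: mulr_ge0|]; lra.
have k5 : 0 <= (beta - 1) * eta * eta * r by apply: mulr_ge0; [apply: mulr_ge0; [apply: mulr_ge0|]|]; lra.
have k6 := ler_wpM2l (ltW (lt_le_trans ltr01 He)) k2.
have k7 : 0 <= eta * ((eta - 1) * beta * r) by apply: mulr_ge0; lra.
rewrite -/r in k1.
have k8 : 0 <= beta * r by apply: mulr_ge0; lra.
rewrite -subr_ge0.
have -> : (F - r) * (2 * (eta * eta)) - beta * (H - r) =
  2 * (eta * (eta * F) - eta * (beta * rho - eta * r)) + (beta * eta * (r + rho) - beta * H)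
  + (eta * beta * rho - eta * beta * (5 * eta * r)) + 4 * ((beta - 1) * eta * eta * r)
  + eta * ((eta - 1) * beta * r) + beta * r by ring.
clearbody F X r H g.
rewrite -subr_ge0 in k1. rewrite -subr_ge0 in k3. rewrite -subr_ge0 in k6.
have m1 : 0 <= 2 * (eta * (eta * F) - eta * (beta * rho - eta * r)) by apply: mulr_ge0.
have m2 : 0 <= 4 * ((beta - 1) * eta * eta * r) by apply: mulr_ge0.
have s1 := addr_ge0 m1 k3.
have s2 := addr_ge0 s1 k1.
have s3 := addr_ge0 s2 m2.
have s4 := addr_ge0 s3 k7.
exact: addr_ge0 s4 k8.
Qed.
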